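(* Let $A$ be a finite nonempty set of positive real numbers, let $P=A\times A\subset\mathbb{R}^2$, and let $m<m'$ be two consecutive elements of the ratio set $A/A=\{b/a: a,b\in A\}$ (i.e. no element of $A/A$ lies strictly between them). Let $n=|\{(x,y)\in P: y/x=m\}|$ and $n'=|\{(x,y)\in P: y/x=m'\}|$. Then the open interval $(m,m')$ contains at least $n+n'-1$ distinct elements of $\frac{A+A}{A+A}$.
   Context: $\frac{A+A}{A+A}:=\left\{\frac{a+b}{c+d}: a,b,c,d\in A\right\}$. *)

(* Defs.v *)
From HB Require Import structures.
From mathcomp Require Import all_boot all_order all_algebra.
Set Implicit Arguments. Unset Strict Implicit. Unset Printing Implicit Defensive.
Import Order.TTheory GRing.Theory Num.Theory.
Local Open Scope ring_scope.

Definition in_ratio_set (R : realFieldType) (A : seq R) (r : R) : Prop :=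
  exists a b, a \in A /\ b \in A /\ r = b / a.

Definition in_sum_ratio_set (R : realFieldType) (A : seq R) (r : R) : Prop :=
  exists a b c d, [/\ a \in A, b \in A, c \in A & d \in A] /\ r = (a + b) / (c + d).

(* |{(x,y) in A x A : y/x = m}|, for A given as a duplicate-free sequence *)
Definition line_count (R : realFieldType) (A : seq R) (m : R) : nat :=
  count (fun p : R * R => p.2 / p.1 == m) [seq (x, y) | x <- A, y <- A].

(* Main.v *)
Require Import Defs.
From HB Require Import structures.
From mathcomp Require Import all_boot all_order all_algebra.
From mathcomp Require Import ring.
Import Order.TTheory GRing.Theory Num.Theory.
Local Open Scope ring_scope.

Lemma ex_min_seq (R : realFieldType) (s : seq R) :
  s != [::] -> exists2 x, x \in s & forall y, y \in s -> x <= y.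
Proof.
elim: s => // a [|b s] IH _.
  exists a; first by rewrite mem_seq1.
  by move=> y; rewrite mem_seq1 => /eqP ->.
have [x xin xmin] := IH isT.
case: (lerP a x) => hax.
  exists a; first by rewrite mem_head.
  move=> y; rewrite in_cons => /orP[/eqP->|/xmin]; [done| exact: le_trans hax].
exists x; first by rewrite in_cons xin orbT.
move=> y; rewrite in_cons => /orP[/eqP->|/xmin //]; exact: ltW.
Qed.

Lemma lc_aux (R : realFieldType) (B C : seq R) (r : R) :
  uniq C -> (forall x, x \in B -> x != 0) ->
  count (fun p : R * R => p.2 / p.1 == r) [seq (x, y) | x <- B, y <- C]
  = count (fun x => r * x \in C) B.
Proof.
move=> uC; elim: B => [|x B IH] hB //=.
rewrite count_cat IH; last by move=> z hz; apply: hB; rewrite in_cons hz orbT.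
congr (_ + _)%N.
rewrite count_map -(count_uniq_mem (r * x) uC).
apply: eq_count => y /=.
have hx : x != 0 by apply: hB; rewrite mem_head.
by apply/eqP/eqP => [<-|->]; rewrite ?mulfK ?divfK.
Qed.

Lemma key (R : realFieldType) (m m' x u y v : R) :
  m < m' -> 0 < x -> 0 < u -> 0 < y -> 0 < v ->
  (m * x + m' * u) / (x + u) = (m * y + m' * v) / (y + v) -> u * y = v * x.
Proof.
move=> hm hx hu hy hv /eqP; rewrite eqr_div ?lt0r_neq0 ?addr_gt0 // => /eqP h.
have : (m' - m) * (u * y - v * x) = 0.
  transitivity ((m * x + m' * u) * (y + v) - (m * y + m' * v) * (x + u)); first by ring.
  by rewrite h subrr.
move/eqP; rewrite mulf_eq0 => /orP[|]; first by rewrite subr_eq0 (gt_eqF hm).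
by rewrite subr_eq0 => /eqP.
Qed.

Lemma bnds {R : realFieldType} (m m' x u : R) :
  m < m' -> 0 < x -> 0 < u ->
  m < (m * x + m' * u) / (x + u) /\ (m * x + m' * u) / (x + u) < m'.
Proof.
move=> hm hx hu; have hxu : 0 < x + u by rewrite addr_gt0.
rewrite ltr_pdivlMr // ltr_pdivrMr // !mulrDr; split.
  by rewrite ltrD2l ltr_pM2r.
by rewrite ltrD2r ltr_pM2r.
Qed.

Theorem mainTheorem2 (R : realFieldType) (A : seq R) (m m' : R) :
  uniq A -> A != [::] -> (forall a, a \in A -> 0 < a) ->
  in_ratio_set A m -> in_ratio_set A m' -> m < m' ->
  (forall r, in_ratio_set A r -> ~ (m < r /\ r < m')) ->
  exists S : seq R,
    [/\ uniq S,
        (line_count A m + line_count A m' - 1 <= size S)%N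
      & forall s, s \in S -> m < s /\ s < m' /\ in_sum_ratio_set A s].
Proof.
move=> uA _ pos [a [b [aA [bA hm]]]] [a' [b' [aA' [bA' hm']]]] mm' _.
have nz : forall x, x \in A -> x != 0 by move=> x /pos /lt0r_neq0.
set X := [seq x <- A | m * x \in A].
set U := [seq u <- A | m' * u \in A].
have hn : line_count A m = size X by rewrite /line_count lc_aux // size_filter.
have hn' : line_count A m' = size U by rewrite /line_count lc_aux // size_filter.
have aX : a \in X by rewrite mem_filter aA andbT hm divfK ?nz ?bA.
have aU : a' \in U by rewrite mem_filter aA' andbT hm' divfK ?nz ?bA'.
have neX : X != [::] by apply/eqP => e; rewrite e in aX.
have [xmin xminX xminP] := @ex_min_seq _ X neX.
have neU : U != [::] by apply/eqP => e; rewrite e in aU.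
have [umin uminU uminP] := @ex_min_seq _ U neU.
have memX : forall x, x \in X -> x \in A /\ m * x \in A.
  by move=> x; rewrite mem_filter => /andP[].
have memU : forall x, x \in U -> x \in A /\ m' * x \in A.
  by move=> x; rewrite mem_filter => /andP[].
have uX : uniq X by rewrite filter_uniq.
have uU : uniq U by rewrite filter_uniq.
pose s x u := (m * x + m' * u) / (x + u).
have [xminA _] := memX _ xminX.
have [uminA _] := memU _ uminU.
exists ([seq s x umin | x <- X] ++ [seq s xmin u | u <- rem umin U]); split.
- rewrite cat_uniq; apply/and3P; split.
  + rewrite map_inj_in_uniq // => x y hx hy /key.
    move/(_ mm' (pos _ (memX _ hx).1) (pos _ uminA) (pos _ (memX _ hy).1) (pos _ uminA)).
    by move/mulfI => -> //; rewrite nz.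
  + apply/hasPn => z /mapP [u hu ->]; apply/mapP => [[x hx]].
    move: hu; rewrite mem_rem_uniq // => /andP[hne hu].
    move/key => /(_ mm' (pos _ xminA) (pos _ (memU _ hu).1) (pos _ (memX _ hx).1) (pos _ uminA)).
    have h1 := xminP _ hx; have h2 : umin < u by rewrite lt_neqAle eq_sym hne uminP.
    have p1 := pos _ xminA; have p2 := pos _ uminA.
    have q1 : umin * xmin < u * xmin by rewrite ltr_pM2r.
    have q2 : u * xmin <= u * x by rewrite ler_pM2l // (lt_trans p2 h2).
    move=> e; by move: q2; rewrite e leNgt q1.
  + rewrite map_inj_in_uniq ?rem_uniq // => u v.
    rewrite !mem_rem_uniq // => /andP[_ hu] /andP[_ hv] /key.
    move/(_ mm' (pos _ xminA) (pos _ (memU _ hu).1) (pos _ xminA) (pos _ (memU _ hv).1)).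
    by rewrite mulrC [v * _]mulrC => /mulfI -> //; rewrite nz.
- rewrite size_cat !size_map size_rem // hn hn'.
  have : (0 < size U)%N by case: (U) aU.
  case: (size U) => // k _.
  by rewrite addnS subn1.
- move=> z; rewrite mem_cat => /orP[] /mapP [y hy ->].
  + have [hyA hmy] := memX _ hy; have [_ hmu] := memU _ uminU.
    have [h1 h2] := @bnds R _ _ _ _ mm' (pos _ hyA) (pos _ uminA).
    split=> //; split=> //.
    by exists (m * y), (m' * umin), y, umin; split.
  + move: hy; rewrite mem_rem_uniq // => /andP[_ hy].
    have [hyA hmy] := memU _ hy; have [_ hmx] := memX _ xminX.
    have [h1 h2] := @bnds R _ _ _ _ mm' (pos _ xminA) (pos _ hyA).
    split=> //; split=> //.
    by exists (m * xmin), (m' * y), xmin, y; split.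
Qed.
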